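(* Let $f:E\to B$ be any morphism in $\mathbf{Gpd}^{\mathbf{G}}$. Then $f$ factors as $f=f_\infty\circ i_\infty$ where $i_\infty:E\to E_\infty$ is a projective trivial cofibration and $f_\infty:E_\infty\to B$ is a projective fibration whose underlying isofibration of groupoids is equipped with a split cleavage.
   Context: $\mathbf{Gpd}^{\mathbf{G}}$ is the category of groupoids equipped with an involution and functors commuting with the involutions, with its projective model structure: weak equivalences (resp. fibrations) are the morphisms whose underlying functor is an equivalence (resp. an isofibration) of groupoids, and cofibrations are the morphisms with the left lifting property against trivial fibrations. A split cleavage for an isofibration $f:A\to C$ assigns to each isomorphism $\sigma:x\to y$ in $C$ and each $z$ with $f(z)=x$ a morphism $c(\sigma,z)$ with domain $z$ and $f(c(\sigma,z))=\sigma$, such that $c(1_x,z)=1_z$ and $c(\tau\circ\sigma,z)=c(\tau,\mathrm{cod}\,c(\sigma,z))\circ c(\sigma,z)$. *)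

(* Defs.v *)
Set Implicit Arguments.
Unset Strict Implicit.

(** * Groupoids, presented with a single type of arrows.
    [comp g f] is  g ∘ f  (defined when [src g = tgt f]; its value on
    non-composable pairs is irrelevant). Every arrow is invertible. *)
Record Gpd := {
  Ob : Type;
  Mor : Type;
  src : Mor -> Ob;
  tgt : Mor -> Ob;
  idm : Ob -> Mor;
  comp : Mor -> Mor -> Mor;
  inv : Mor -> Mor;
  src_idm : forall x, src (idm x) = x;
  tgt_idm : forall x, tgt (idm x) = x;
  src_comp : forall g f, src g = tgt f -> src (comp g f) = src f;
  tgt_comp : forall g f, src g = tgt f -> tgt (comp g f) = tgt g;
  comp_idr : forall f, comp f (idm (src f)) = f;
  comp_idl : forall f, comp (idm (tgt f)) f = f;
  comp_assoc : forall h g f, src h = tgt g -> src g = tgt f ->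
      comp h (comp g f) = comp (comp h g) f;
  src_inv : forall f, src (inv f) = tgt f;
  tgt_inv : forall f, tgt (inv f) = src f;
  comp_invl : forall f, comp (inv f) f = idm (src f);
  comp_invr : forall f, comp f (inv f) = idm (tgt f)
}.

Arguments src {_} _.
Arguments tgt {_} _.
Arguments idm {_} _.
Arguments comp {_} _ _.
Arguments inv {_} _.

Record Functor (A C : Gpd) := {
  fob : Ob A -> Ob C;
  fmor : Mor A -> Mor C;
  fsrc : forall g, src (fmor g) = fob (src g);
  ftgt : forall g, tgt (fmor g) = fob (tgt g);
  fidm : forall x, fmor (idm x) = idm (fob x);
  fcomp : forall g f, src g = tgt f -> fmor (comp g f) = comp (fmor g) (fmor f)
}.

Arguments fob {A C} _ _.
Arguments fmor {A C} _ _.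

(** * Objects of Gpd^G: groupoids with a (strict) involution, i.e. an
    endofunctor [s] with [s ∘ s = id]. *)
Record GpdG := {
  ggpd :> Gpd;
  gs : Functor ggpd ggpd;
  gs_invol_ob : forall x, fob gs (fob gs x) = x;
  gs_invol_mor : forall g, fmor gs (fmor gs g) = g
}.

Record GMor (E B : GpdG) := {
  gfun :> Functor E B;
  gcomm_ob : forall x, fob gfun (fob (gs E) x) = fob (gs B) (fob gfun x);
  gcomm_mor : forall g, fmor gfun (fmor (gs E) g) = fmor (gs B) (fmor gfun g)
}.

Definition gm_eq (E B : GpdG) (f g : GMor E B) : Prop :=
  (forall x, fob f x = fob g x) /\ (forall m, fmor f m = fmor g m).

Definition fun_comp (A B C : Gpd) (g : Functor B C) (f : Functor A B) : Functor A C.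
Proof.
  refine {| fob := fun x => fob g (fob f x); fmor := fun m => fmor g (fmor f m) |}.
  - intro m; rewrite (fsrc g), (fsrc f); reflexivity.
  - intro m; rewrite (ftgt g), (ftgt f); reflexivity.
  - intro x; rewrite (fidm f), (fidm g); reflexivity.
  - intros m n H. rewrite (fcomp f H), (fcomp g); [reflexivity|].
    rewrite (fsrc f), (ftgt f), H; reflexivity.
Defined.

Definition gm_comp (A B C : GpdG) (g : GMor B C) (f : GMor A B) : GMor A C.
Proof.
  refine {| gfun := fun_comp g f |}; simpl.
  - intro x; rewrite (gcomm_ob f), (gcomm_ob g); reflexivity.
  - intro m; rewrite (gcomm_mor f), (gcomm_mor g); reflexivity.
Defined.

Definition fully_faithful (A C : Gpd) (F : Functor A C) : Prop :=
  forall (x y : Ob A) (g : Mor C), src g = fob F x -> tgt g = fob F y ->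
    exists h : Mor A, (src h = x /\ tgt h = y /\ fmor F h = g) /\
      forall h' : Mor A, src h' = x -> tgt h' = y -> fmor F h' = g -> h' = h.

Definition ess_surj (A C : Gpd) (F : Functor A C) : Prop :=
  forall b : Ob C, exists (a : Ob A) (g : Mor C), src g = fob F a /\ tgt g = b.

Definition is_equivalence (A C : Gpd) (F : Functor A C) : Prop :=
  fully_faithful F /\ ess_surj F.

Definition is_isofibration (A C : Gpd) (F : Functor A C) : Prop :=
  forall (s : Mor C) (z : Ob A), fob F z = src s ->
    exists m : Mor A, src m = z /\ fmor F m = s.

(** Split cleavage for F : A -> C (a choice c(s,z) of lifts, given as a
    total function whose values matter only when [fob F z = src s]). *)
Definition is_split_cleavage (A C : Gpd) (F : Functor A C)
    (c : Mor C -> Ob A -> Mor A) : Prop :=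
  (forall s z, fob F z = src s -> src (c s z) = z /\ fmor F (c s z) = s) /\
  (forall x z, fob F z = x -> c (idm x) z = idm z) /\
  (forall t s z, src t = tgt s -> fob F z = src s ->
      c (comp t s) z = comp (c t (tgt (c s z))) (c s z)).

Definition has_split_cleavage (A C : Gpd) (F : Functor A C) : Prop :=
  exists c, is_split_cleavage F c.

Definition proj_weq (E B : GpdG) (f : GMor E B) : Prop := is_equivalence f.
Definition proj_fib (E B : GpdG) (f : GMor E B) : Prop := is_isofibration f.
Definition proj_triv_fib (E B : GpdG) (f : GMor E B) : Prop :=
  proj_fib f /\ proj_weq f.

Definition llp (A B X Y : GpdG) (i : GMor A B) (p : GMor X Y) : Prop :=
  forall (u : GMor A X) (v : GMor B Y),
    gm_eq (gm_comp p u) (gm_comp v i) ->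
    exists h : GMor B X, gm_eq (gm_comp h i) u /\ gm_eq (gm_comp p h) v.

Definition proj_cof (A B : GpdG) (i : GMor A B) : Prop :=
  forall (X Y : GpdG) (p : GMor X Y), proj_triv_fib p -> llp i p.

Definition proj_triv_cof (A B : GpdG) (i : GMor A B) : Prop :=
  proj_cof i /\ proj_weq i.

(* Main.v *)
Require Import Defs.
From Stdlib Require Import ProofIrrelevance ClassicalEpsilon PeanoNat Lia Bool.
Set Implicit Arguments.
Unset Strict Implicit.

Lemma sig_ext A (P : A -> Prop) (a b : sig P) : proj1_sig a = proj1_sig b -> a = b.
Proof. destruct a, b; simpl; intros ->. f_equal; apply proof_irrelevance. Qed.

Definition decP (P:Prop) : {P}+{~P} := excluded_middle_informative P.

Ltac gs := repeat first [ rewrite src_comp by gs | rewrite tgt_comp by gs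
  | rewrite src_inv | rewrite tgt_inv | rewrite src_idm | rewrite tgt_idm ];
  try congruence.

Lemma inv_unique (G : Gpd) (g f : Mor G) : src g = tgt f -> comp g f = idm (src f) -> g = inv f.
Proof.
  intros H1 H2.
  rewrite <- (comp_idr g), H1, <- comp_invr, comp_assoc; gs.
  rewrite H2, <- (tgt_inv f), comp_idl. reflexivity.
Qed.

Lemma finv (A C : Gpd) (F : Functor A C) g : fmor F (inv g) = inv (fmor F g).
Proof.
  apply inv_unique.
  - rewrite fsrc, ftgt, src_inv; reflexivity.
  - rewrite <- fcomp by (rewrite src_inv; reflexivity).
    rewrite comp_invl, fidm, fsrc; reflexivity.
Qed.

Lemma inv_idm (G : Gpd) (x : Ob G) : inv (idm x) = idm x.
Proof.
  symmetry; apply inv_unique; gs.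
  rewrite <- (tgt_idm x) at 1. rewrite comp_idl. reflexivity.
Qed.

Lemma conj_comp (G:Gpd) (sz sy sx g h : Mor G) :
  src g = tgt h -> src sz = tgt g -> src sy = tgt h -> src sx = src h ->
  comp (comp sz (comp g (inv sy))) (comp sy (comp h (inv sx)))
  = comp sz (comp (comp g h) (inv sx)).
Proof.
  intros H1 H2 H3 H4.
  rewrite <- comp_assoc by gs.
  rewrite <- (comp_assoc (h:=g)) by gs.
  rewrite (comp_assoc (h:=inv sy)) by gs.
  rewrite comp_invl, H3, <- (tgt_comp (g:=h) (f:=inv sx)) by gs.
  rewrite comp_idl. rewrite (comp_assoc (h:=g)) by gs. reflexivity.
Qed.

Lemma conj_id (G:Gpd) (g : Mor G) : comp (idm (tgt g)) (comp g (inv (idm (src g)))) = g.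
Proof. rewrite inv_idm, comp_idr, comp_idl; reflexivity. Qed.

Definition isidb (G : Gpd) (m : Mor G) : bool := if decP (m = idm (src m)) then true else false.

Lemma isidb_idm (G:Gpd) (x : Ob G) : isidb (idm x) = true.
Proof. unfold isidb; destruct decP as [|n]; auto. exfalso; apply n; rewrite src_idm; auto. Qed.

Lemma isidb_true (G:Gpd) (m : Mor G) : isidb m = true -> m = idm (src m).
Proof. unfold isidb; destruct decP; auto; discriminate. Qed.

Lemma isidb_s (B : GpdG) (m : Mor B) : isidb (fmor (gs B) m) = isidb m.
Proof.
  unfold isidb; destruct (decP (m = idm (src m))) as [H|H];
  destruct decP as [H'|H']; auto; exfalso.
  - apply H'. rewrite H at 1. rewrite fidm, fsrc; reflexivity.
  - apply H. rewrite <- (gs_invol_mor m) at 1. rewrite H', fidm, fsrc, gs_invol_ob; reflexivity.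
Qed.

Definition pi (b : bool) (j : nat) : nat :=
  if b then (if Nat.eqb j 0 then 0 else if Nat.odd j then S j else pred j)
  else (if Nat.even j then S j else pred j).
Definition posb (b:bool) (j:nat) : bool := if b then Nat.odd j else Nat.even j.
Definition case1 (b:bool) (j:nat) : bool := b && Nat.eqb j 0.

Lemma odd_S j : Nat.odd (S j) = negb (Nat.odd j).
Proof. rewrite Nat.odd_succ, <- Nat.negb_odd; reflexivity. Qed.

Lemma pi_invol b j : pi b (pi b j) = j.
Proof.
  destruct b; unfold pi.
  - destruct (Nat.eqb_spec j 0) as [->|Hj]; [reflexivity|].
    destruct (Nat.odd j) eqn:Ho; cbn -[Nat.even Nat.odd].
    + rewrite odd_S, Ho; cbn -[Nat.even Nat.odd]. reflexivity.
    + destruct j as [|j]; [lia|]. cbn -[Nat.even Nat.odd].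
      destruct (Nat.eqb_spec j 0) as [->|Hj']; [discriminate|].
      rewrite odd_S in Ho. destruct (Nat.odd j); [reflexivity|discriminate].
  - destruct (Nat.even j) eqn:He; cbn -[Nat.even Nat.odd].
    + rewrite Nat.even_succ, <- Nat.negb_even, He; reflexivity.
    + destruct j as [|j]; [discriminate|]. cbn -[Nat.even Nat.odd].
      rewrite Nat.even_succ, <- Nat.negb_even in He.
      destruct (Nat.even j); [reflexivity|discriminate].
Qed.

Lemma case1_pi b j : case1 b (pi b j) = case1 b j.
Proof.
  destruct b; unfold case1, pi; cbn -[Nat.even Nat.odd]; auto.
  destruct (Nat.eqb_spec j 0) as [->|Hj]; auto.
  destruct (Nat.odd j) eqn:Ho; cbn -[Nat.even Nat.odd]; auto.
  destruct j; [lia|]; cbn -[Nat.even Nat.odd]. destruct j; auto.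
Qed.

Lemma posb_pi b j : case1 b j = false -> posb b (pi b j) = negb (posb b j).
Proof.
  destruct b; unfold case1, pi, posb; cbn -[Nat.even Nat.odd]; intro H.
  - rewrite H. destruct (Nat.odd j) eqn:Ho.
    + rewrite odd_S, Ho; reflexivity.
    + destruct j; [discriminate|]. cbn -[Nat.even Nat.odd]. rewrite odd_S in Ho.
      destruct (Nat.odd j); auto.
  - destruct (Nat.even j) eqn:He.
    + rewrite Nat.even_succ, <- Nat.negb_even, He; reflexivity.
    + destruct j; [discriminate|]. cbn -[Nat.even Nat.odd]. rewrite Nat.even_succ, <- Nat.negb_even in He.
      destruct (Nat.even j); auto.
Qed.

Section Inf.
Variables (E B : GpdG) (f : GMor E B).

Definition OI := {p : Ob E * Mor B * nat | src (snd (fst p)) = fob f (fst (fst p))}.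
Definition oe (x : OI) : Ob E := fst (fst (proj1_sig x)).
Definition osig (x : OI) : Mor B := snd (fst (proj1_sig x)).
Definition oj (x : OI) : nat := snd (proj1_sig x).
Lemma osig_src x : src (osig x) = fob f (oe x).
Proof. exact (proj2_sig x). Qed.

Definition MI := {t : OI * OI * Mor E | src (snd t) = oe (fst (fst t)) /\ tgt (snd t) = oe (snd (fst t))}.
Definition msrc (g : MI) : OI := fst (fst (proj1_sig g)).
Definition mtgt (g : MI) : OI := snd (fst (proj1_sig g)).
Definition mm (g : MI) : Mor E := snd (proj1_sig g).
Lemma mm_src g : src (mm g) = oe (msrc g). Proof. exact (proj1 (proj2_sig g)). Qed.
Lemma mm_tgt g : tgt (mm g) = oe (mtgt g). Proof. exact (proj2 (proj2_sig g)). Qed.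

Lemma MI_eta (g : MI) : proj1_sig g = (msrc g, mtgt g, mm g).
Proof. destruct g as [[[x y] m] H]; reflexivity. Qed.
Lemma OI_eta (x : OI) : proj1_sig x = (oe x, osig x, oj x).
Proof. destruct x as [[[e s] j] H]; reflexivity. Qed.

Definition midm (x : OI) : MI :=
  exist _ (x, x, idm (oe x)) (conj (src_idm _) (tgt_idm _)).

Lemma mcomp_pf (g h : MI) : src (mm g) = tgt (mm h) ->
  src (comp (mm g) (mm h)) = oe (msrc h) /\ tgt (comp (mm g) (mm h)) = oe (mtgt g).
Proof. intro H; rewrite src_comp, tgt_comp by exact H; split; [apply mm_src|apply mm_tgt]. Qed.

Definition mcomp (g h : MI) : MI :=
  match decP (src (mm g) = tgt (mm h)) with
  | left H => exist _ (msrc h, mtgt g, comp (mm g) (mm h)) (mcomp_pf H)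
  | right _ => h end.

Lemma mcomp_eq g h : src (mm g) = tgt (mm h) ->
  proj1_sig (mcomp g h) = (msrc h, mtgt g, comp (mm g) (mm h)).
Proof. intro H; unfold mcomp; destruct decP; [reflexivity|contradiction]. Qed.

Lemma msrc_mcomp g h : src (mm g) = tgt (mm h) -> msrc (mcomp g h) = msrc h.
Proof. intro H; unfold msrc at 1; rewrite (mcomp_eq H); reflexivity. Qed.
Lemma mtgt_mcomp g h : src (mm g) = tgt (mm h) -> mtgt (mcomp g h) = mtgt g.
Proof. intro H; unfold mtgt at 1; rewrite (mcomp_eq H); reflexivity. Qed.
Lemma mm_mcomp g h : src (mm g) = tgt (mm h) -> mm (mcomp g h) = comp (mm g) (mm h).
Proof. intro H; unfold mm at 1; rewrite (mcomp_eq H); reflexivity. Qed.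

Lemma mcomp_ok g h : msrc g = mtgt h -> src (mm g) = tgt (mm h).
Proof. intro H; rewrite mm_src, mm_tgt, H; reflexivity. Qed.

Definition minv (g : MI) : MI :=
  exist _ (mtgt g, msrc g, inv (mm g))
   (conj (eq_trans (src_inv _) (mm_tgt g)) (eq_trans (tgt_inv _) (mm_src g))).

Lemma mm_midm x : mm (midm x) = idm (oe x). Proof. reflexivity. Qed.
Lemma mm_minv g : mm (minv g) = inv (mm g). Proof. reflexivity. Qed.
Lemma msrc_midm x : msrc (midm x) = x. Proof. reflexivity. Qed.
Lemma mtgt_midm x : mtgt (midm x) = x. Proof. reflexivity. Qed.
Lemma msrc_minv g : msrc (minv g) = mtgt g. Proof. reflexivity. Qed.
Lemma mtgt_minv g : mtgt (minv g) = msrc g. Proof. reflexivity. Qed.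
Ltac mis := rewrite ?mm_midm, ?msrc_midm, ?mtgt_midm, ?mm_minv, ?msrc_minv, ?mtgt_minv.

Definition GI : Gpd.
Proof.
  refine (@Build_Gpd OI MI msrc mtgt midm mcomp minv _ _ _ _ _ _ _ _ _ _ _).
  - reflexivity.
  - reflexivity.
  - intros g h H. unfold msrc at 1. rewrite (mcomp_eq (mcomp_ok H)). reflexivity.
  - intros g h H. unfold mtgt at 1. rewrite (mcomp_eq (mcomp_ok H)). reflexivity.
  - intro g. apply sig_ext. rewrite mcomp_eq by (rewrite mm_midm, tgt_idm; apply mm_src).
    rewrite MI_eta. mis. rewrite <- mm_src, comp_idr. reflexivity.
  - intro g. apply sig_ext. rewrite mcomp_eq by (rewrite mm_midm, src_idm; symmetry; apply mm_tgt).
    rewrite MI_eta. mis. rewrite <- mm_tgt, comp_idl. reflexivity.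
  - intros h g k H1 H2. apply sig_ext.
    pose proof (mcomp_ok H1) as K1. pose proof (mcomp_ok H2) as K2.
    assert (K3 : src (mm h) = tgt (mm (mcomp g k))).
    { rewrite (mm_mcomp K2), tgt_comp; auto. }
    assert (K4 : src (mm (mcomp h g)) = tgt (mm k)).
    { rewrite (mm_mcomp K1), src_comp; auto. }
    rewrite (mcomp_eq K3), (mcomp_eq K4).
    rewrite (msrc_mcomp K2), (mtgt_mcomp K1), (mm_mcomp K1), (mm_mcomp K2).
    rewrite comp_assoc; auto.
  - reflexivity.
  - reflexivity.
  - intro g. apply sig_ext. rewrite mcomp_eq by (rewrite mm_minv, src_inv; reflexivity).
    mis. rewrite comp_invl, mm_src. reflexivity.
  - intro g. apply sig_ext. rewrite mcomp_eq by (rewrite mm_minv, tgt_inv; reflexivity).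
    mis. rewrite comp_invr, mm_tgt. reflexivity.
Defined.


Definition sob (x : OI) : OI :=
  exist _ (fob (gs E) (oe x), fmor (gs B) (osig x), pi (isidb (osig x)) (oj x))
   (eq_trans (eq_trans (fsrc _ _) (f_equal _ (osig_src x))) (eq_sym (gcomm_ob f _))).
Lemma oe_sob x : oe (sob x) = fob (gs E) (oe x). Proof. reflexivity. Qed.
Lemma osig_sob x : osig (sob x) = fmor (gs B) (osig x). Proof. reflexivity. Qed.
Lemma oj_sob x : oj (sob x) = pi (isidb (osig x)) (oj x). Proof. reflexivity. Qed.

Lemma sob_invol x : sob (sob x) = x.
Proof.
  apply sig_ext. rewrite OI_eta, (OI_eta x), oe_sob, osig_sob, oj_sob, oe_sob, osig_sob, oj_sob.
  rewrite isidb_s, pi_invol, gs_invol_ob, gs_invol_mor. reflexivity.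
Qed.

Definition smor (g : MI) : MI :=
  exist _ (sob (msrc g), sob (mtgt g), fmor (gs E) (mm g))
   (conj (eq_trans (fsrc _ _) (f_equal _ (mm_src g))) (eq_trans (ftgt _ _) (f_equal _ (mm_tgt g)))).
Lemma mm_smor g : mm (smor g) = fmor (gs E) (mm g). Proof. reflexivity. Qed.
Lemma msrc_smor g : msrc (smor g) = sob (msrc g). Proof. reflexivity. Qed.
Lemma mtgt_smor g : mtgt (smor g) = sob (mtgt g). Proof. reflexivity. Qed.

Definition SI : Functor GI GI.
Proof.
  refine (@Build_Functor GI GI sob smor _ _ _ _).
  - reflexivity.
  - reflexivity.
  - intro x. apply sig_ext. simpl. mis. rewrite fidm. reflexivity.
  - intros g h H. simpl in *. pose proof (mcomp_ok H) as K.
    assert (K' : src (mm (smor g)) = tgt (mm (smor h))).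
    { rewrite !mm_smor, fsrc, ftgt, K. reflexivity. }
    apply sig_ext. rewrite (mcomp_eq K'), MI_eta, mm_smor, msrc_smor, mtgt_smor,
      (mm_mcomp K), (msrc_mcomp K), (mtgt_mcomp K), fcomp by exact K. reflexivity.
Defined.

Definition EI : GpdG.
Proof.
  refine (@Build_GpdG GI SI _ _).
  - exact sob_invol.
  - intro g. apply sig_ext. simpl. rewrite (MI_eta g), mm_smor, msrc_smor, mtgt_smor, !sob_invol, gs_invol_mor. reflexivity.
Defined.

Section Conj.
Variables (X : Gpd) (F : Functor E X) (rho : OI -> Mor X)
  (Hr : forall x, src (rho x) = fob F (oe x)).

Ltac gs2 := repeat first [ rewrite src_comp by gs2 | rewrite tgt_comp by gs2
  | rewrite src_inv | rewrite tgt_inv | rewrite src_idm | rewrite tgt_idm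
  | rewrite fsrc | rewrite ftgt | rewrite Hr | rewrite mm_src | rewrite mm_tgt ];
  try congruence.

Definition cfmor (g : MI) : Mor X := comp (rho (mtgt g)) (comp (fmor F (mm g)) (inv (rho (msrc g)))).

Definition conjF : Functor GI X.
Proof.
  refine (@Build_Functor GI X (fun x => tgt (rho x)) cfmor _ _ _ _).
  - intro g. unfold cfmor. gs2; reflexivity.
  - intro g. unfold cfmor. gs2; reflexivity.
  - intro x. unfold cfmor. simpl. mis. rewrite fidm, <- Hr, <- tgt_inv, comp_idl, comp_invr. reflexivity.
  - intros g h H. simpl in *. pose proof (mcomp_ok H) as K. unfold cfmor.
    rewrite (msrc_mcomp K), (mtgt_mcomp K), (mm_mcomp K), fcomp by exact K.
    rewrite H. symmetry. apply conj_comp; gs2.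
Defined.
End Conj.

Definition conjG (X : GpdG) (F : GMor E X) (rho : OI -> Mor X)
  (Hr : forall x, src (rho x) = fob F (oe x))
  (Hs : forall x, rho (sob x) = fmor (gs X) (rho x)) : GMor EI X.
Proof.
  refine (@Build_GMor EI X (conjF Hr) _ _).
  - intro x. simpl. rewrite Hs, ftgt. reflexivity.
  - intro g. simpl. unfold cfmor. rewrite msrc_smor, mtgt_smor, mm_smor, !Hs, gcomm_mor.
    assert (A1 : src (fmor F (mm g)) = tgt (inv (rho (msrc g)))).
    { rewrite fsrc, tgt_inv, Hr, mm_src. reflexivity. }
    assert (A2 : src (rho (mtgt g)) = tgt (comp (fmor F (mm g)) (inv (rho (msrc g))))).
    { rewrite tgt_comp by exact A1. rewrite ftgt, Hr, mm_tgt. reflexivity. }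
    rewrite (fcomp _ A2), (fcomp _ A1), finv. reflexivity.
Defined.

Definition iob (e : Ob E) : OI := exist _ (e, idm (fob f e), 0) (src_idm _).
Definition imor (m : Mor E) : MI := exist _ (iob (src m), iob (tgt m), m) (conj eq_refl eq_refl).

Definition IF : Functor E GI.
Proof.
  refine (@Build_Functor E GI iob imor _ _ _ _).
  - reflexivity.
  - reflexivity.
  - intro x. apply sig_ext. simpl. rewrite src_idm, tgt_idm. reflexivity.
  - intros g h H. assert (K : src (mm (imor g)) = tgt (mm (imor h))) by exact H.
    apply sig_ext. simpl. rewrite (mcomp_eq K). simpl. rewrite src_comp, tgt_comp by exact H.
    reflexivity.
Defined.

Lemma iob_s x : iob (fob (gs E) x) = sob (iob x).
Proof.
  apply sig_ext. simpl. change (osig (iob x)) with (idm (fob f x)). change (oj (iob x)) with 0. change (oe (iob x)) with x. rewrite fidm, isidb_idm, gcomm_ob. reflexivity.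
Qed.

Definition iinf : GMor E EI.
Proof.
  refine (@Build_GMor E EI IF _ _).
  - exact iob_s.
  - intro m. apply sig_ext. simpl. rewrite fsrc, ftgt, !iob_s. reflexivity.
Defined.

Lemma conjF_i (X : Gpd) (F : Functor E X) rho Hr
  (Hi : forall e, rho (iob e) = idm (fob F e)) m :
  fmor (@conjF X F rho Hr) (imor m) = fmor F m.
Proof.
  simpl. unfold cfmor. change (mtgt (imor m)) with (iob (tgt m)).
  change (msrc (imor m)) with (iob (src m)). change (mm (imor m)) with m.
  rewrite !Hi, <- fsrc, <- ftgt. apply conj_id.
Qed.

Definition finf : GMor EI B := @conjG B f osig osig_src (fun x => eq_refl).

Lemma fact_f : gm_eq f (gm_comp finf iinf).
Proof.
  split.
  - intro x. simpl. change (osig (iob x)) with (idm (fob f x)). rewrite tgt_idm. reflexivity.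
  - intro m. symmetry. apply (conjF_i (F := f) (rho := osig)). reflexivity.
Qed.

Lemma act_pf (t : Mor B) (z : OI) (H : src t = tgt (osig z)) :
  src (snd (fst (oe z, comp t (osig z), oj z))) = fob f (fst (fst (oe z, comp t (osig z), oj z))).
Proof. simpl. rewrite src_comp by exact H. apply osig_src. Qed.

Definition act (t : Mor B) (z : OI) : OI :=
  match decP (src t = tgt (osig z)) with
  | left H => exist _ (oe z, comp t (osig z), oj z) (act_pf H)
  | right _ => z end.

Lemma act_eq t z : src t = tgt (osig z) -> proj1_sig (act t z) = (oe z, comp t (osig z), oj z).
Proof. intro H; unfold act; destruct decP; [reflexivity|contradiction]. Qed.

Lemma oe_act t z : oe (act t z) = oe z.
Proof. unfold act; destruct decP; reflexivity. Qed.

Definition cl (t : Mor B) (z : OI) : MI :=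
  exist _ (z, act t z, idm (oe z)) (conj (src_idm _) (eq_trans (tgt_idm _) (eq_sym (oe_act t z)))).

Lemma osig_act t z : src t = tgt (osig z) -> osig (act t z) = comp t (osig z).
Proof. intro H. unfold osig at 1. rewrite (act_eq H). reflexivity. Qed.

Lemma finf_split : is_split_cleavage finf cl.
Proof.
  split; [|split].
  - intros t z H. simpl in H. split; [reflexivity|].
    simpl. unfold cfmor. change (mtgt (cl t z)) with (act t z).
    change (msrc (cl t z)) with z. change (mm (cl t z)) with (idm (oe z)).
    rewrite osig_act by congruence. rewrite fidm, <- osig_src, <- tgt_inv, comp_idl.
    rewrite <- comp_assoc by (rewrite ?tgt_inv; congruence).
    rewrite comp_invr, H, comp_idr. reflexivity.
  - intros x z H. simpl in H. apply sig_ext. simpl.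
    assert (A : act (idm x) z = z).
    { apply sig_ext. rewrite act_eq by (rewrite src_idm; auto).
      rewrite OI_eta. rewrite <- H, comp_idl. reflexivity. }
    rewrite A. reflexivity.
  - intros t s z H1 H2. simpl in H2.
    assert (K : src (mm (cl t (mtgt (cl s z)))) = tgt (mm (cl s z))).
    { change (src (idm (oe (mtgt (cl s z)))) = tgt (idm (oe z))). rewrite src_idm, tgt_idm. apply oe_act. }
    apply sig_ext. simpl. rewrite (mcomp_eq K). simpl.
    assert (A : act (comp t s) z = act t (act s z)).
    { apply sig_ext. rewrite act_eq by (rewrite src_comp; auto).
      rewrite act_eq by (rewrite osig_act by congruence; rewrite tgt_comp; auto).
      rewrite oe_act, osig_act by congruence.
      unfold oj at 2. rewrite act_eq by congruence. simpl.
      rewrite comp_assoc; auto. }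
    rewrite A. change (mm (cl t (mtgt (cl s z)))) with (idm (oe (act s z))). change (mm (cl s z)) with (idm (oe z)).
    rewrite oe_act. rewrite <- (tgt_idm (oe z)) at 2. rewrite comp_idl. reflexivity.
Qed.

Lemma finf_fib : proj_fib finf.
Proof. intros s z H. exists (cl s z). apply (proj1 finf_split); auto. Qed.

Lemma iinf_weq : proj_weq iinf.
Proof.
  split.
  - intros x y g H1 H2. exists (mm g). split.
    + split; [|split].
      * rewrite mm_src. simpl in H1. rewrite H1. reflexivity.
      * rewrite mm_tgt. simpl in H2. rewrite H2. reflexivity.
      * apply sig_ext. simpl. rewrite (MI_eta g). simpl in H1, H2.
        rewrite mm_src, mm_tgt, H1, H2. reflexivity.
    + intros h' _ _ Hh. rewrite <- Hh. reflexivity.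
  - intro b. exists (oe b).
    exists (exist _ (iob (oe b), b, idm (oe b)) (conj (src_idm _) (tgt_idm _)) : MI).
    split; reflexivity.
Qed.

End Inf.

Section Decomp.
Variables (E B : GpdG) (f : GMor E B).

Definition kap (x : OI f) : MI f :=
  exist _ (iob f (oe x), x, idm (oe x)) (conj (src_idm _) (tgt_idm _)).

Lemma decomp (g : MI f) :
  g = mcomp (kap (mtgt g)) (mcomp (imor f (mm g)) (minv (kap (msrc g)))).
Proof.
  assert (K1 : src (mm (imor f (mm g))) = tgt (mm (minv (kap (msrc g))))).
  { change (src (mm g) = tgt (inv (idm (oe (msrc g))))). rewrite tgt_inv, src_idm. apply mm_src. }
  assert (K2 : src (mm (kap (mtgt g))) = tgt (mm (mcomp (imor f (mm g)) (minv (kap (msrc g)))))).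
  { rewrite (mm_mcomp K1), tgt_comp by exact K1.
    change (src (idm (oe (mtgt g))) = tgt (mm g)). rewrite src_idm, mm_tgt. reflexivity. }
  apply sig_ext. rewrite (mcomp_eq K2), (msrc_mcomp K1), (mm_mcomp K1), MI_eta.
  change (mm (kap (mtgt g))) with (idm (oe (mtgt g))).
  change (mm (imor f (mm g))) with (mm g).
  change (mm (minv (kap (msrc g)))) with (inv (idm (oe (msrc g)))).
  change (msrc (minv (kap (msrc g)))) with (msrc g).
  change (mtgt (kap (mtgt g))) with (mtgt g).
  rewrite <- mm_src, <- mm_tgt, conj_id. reflexivity.
Qed.

Lemma decompF (Z : Gpd) (G : Functor (GI f) Z) (g : MI f) :
  fmor G g = comp (fmor G (kap (mtgt g)))
     (comp (fmor G (imor f (mm g))) (inv (fmor G (kap (msrc g))))).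
Proof.
  transitivity (fmor G (@comp (GI f) (kap (mtgt g)) (@comp (GI f) (imor f (mm g)) (@inv (GI f) (kap (msrc g)))))).
  { f_equal. apply decomp. }
  assert (K1 : src (mm (imor f (mm g))) = tgt (mm (minv (kap (msrc g))))).
  { change (src (mm g) = tgt (inv (idm (oe (msrc g))))). rewrite tgt_inv, src_idm. apply mm_src. }
  assert (S2 : @src (GI f) (imor f (mm g)) = @tgt (GI f) (@inv (GI f) (kap (msrc g)))) by (change (iob f (src (mm g)) = iob f (oe (msrc g))); rewrite mm_src; reflexivity).
  assert (S1 : @src (GI f) (kap (mtgt g)) = @tgt (GI f) (@comp (GI f) (imor f (mm g)) (@inv (GI f) (kap (msrc g))))).
  { change (iob f (oe (mtgt g)) = mtgt (mcomp (imor f (mm g)) (minv (kap (msrc g))))). rewrite (mtgt_mcomp K1). change (iob f (oe (mtgt g)) = iob f (tgt (mm g))). rewrite mm_tgt. reflexivity. }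
  rewrite (fcomp G S1), (fcomp G S2), finv. reflexivity.
Qed.
End Decomp.

Section Lift.
Variables (E B X Y : GpdG) (f : GMor E B) (p : GMor X Y) (u : GMor E X) (v : GMor (EI f) Y).
Hypothesis Hp : is_isofibration p.
Hypothesis H : gm_eq (gm_comp p u) (gm_comp v (iinf f)).

Lemma Hob e : fob p (fob u e) = fob v (iob f e).
Proof. exact (proj1 H e). Qed.
Lemma Hmor m : fmor p (fmor u m) = fmor v (imor f m).
Proof. exact (proj2 H m). Qed.

Lemma lift_ex (x : OI f) : exists m, src m = fob u (oe x) /\ fmor p m = fmor v (kap x).
Proof.
  apply Hp. rewrite fsrc. rewrite Hob. reflexivity.
Qed.

Definition L (x : OI f) : Mor X := proj1_sig (constructive_indefinite_description _ (lift_ex x)).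
Lemma L_spec x : src (L x) = fob u (oe x) /\ fmor p (L x) = fmor v (kap x).
Proof. exact (proj2_sig (constructive_indefinite_description _ (lift_ex x))). Qed.

Definition c1 (x : OI f) := case1 (isidb (osig x)) (oj x).
Definition ps (x : OI f) := posb (isidb (osig x)) (oj x).

Definition ell (x : OI f) : Mor X :=
  if c1 x then idm (fob u (oe x)) else if ps x then L x else fmor (gs X) (L (sob x)).

Lemma c1_sob x : c1 (sob x) = c1 x.
Proof. unfold c1. rewrite osig_sob, oj_sob, isidb_s. apply case1_pi. Qed.
Lemma ps_sob x : c1 x = false -> ps (sob x) = negb (ps x).
Proof. unfold c1, ps. rewrite osig_sob, oj_sob, isidb_s. apply posb_pi. Qed.

Lemma c1_iob (x : OI f) : c1 x = true -> x = iob f (oe x).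
Proof.
  unfold c1, case1. intro Hc. apply andb_prop in Hc as [H1 H2].
  apply isidb_true in H1. apply Nat.eqb_eq in H2.
  apply sig_ext. rewrite OI_eta. simpl. rewrite H1, osig_src, H2. reflexivity.
Qed.

Lemma c1_i e : c1 (iob f e) = true.
Proof. unfold c1. change (case1 (isidb (idm (fob f e))) 0 = true). rewrite isidb_idm. reflexivity. Qed.

Lemma ell_i e : ell (iob f e) = idm (fob u e).
Proof. unfold ell. rewrite c1_i. reflexivity. Qed.

Lemma ell_src x : src (ell x) = fob u (oe x).
Proof.
  unfold ell. destruct (c1 x). { apply src_idm. }
  destruct (ps x). { apply (proj1 (L_spec x)). }
  rewrite fsrc, (proj1 (L_spec _)), oe_sob, gcomm_ob, gs_invol_ob. reflexivity.
Qed.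

Lemma ell_s x : ell (sob x) = fmor (gs X) (ell x).
Proof.
  unfold ell. rewrite c1_sob. destruct (c1 x) eqn:Hc.
  { rewrite fidm, oe_sob, gcomm_ob. reflexivity. }
  rewrite (ps_sob Hc). destruct (ps x); simpl.
  - rewrite sob_invol. reflexivity.
  - rewrite gs_invol_mor. reflexivity.
Qed.

Lemma kap_s (x : OI f) : smor (kap (sob x)) = kap x.
Proof.
  apply sig_ext. simpl.
  change (msrc (kap (sob x))) with (iob f (oe (sob x))).
  change (mtgt (kap (sob x))) with (sob x).
  change (mm (kap (sob x))) with (idm (oe (sob x))).
  rewrite sob_invol, oe_sob, <- iob_s, gs_invol_ob, fidm, gs_invol_ob. reflexivity.
Qed.

Lemma ell_p x : fmor p (ell x) = fmor v (kap x).
Proof.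
  unfold ell. destruct (c1 x) eqn:Hc.
  - rewrite fidm. pose proof (c1_iob Hc) as Hx.
    assert (K : kap x = midm x).
    { apply sig_ext. simpl. rewrite <- Hx. reflexivity. }
    rewrite K. change (midm x) with (@idm (GI f) x). rewrite fidm. rewrite Hx at 2. rewrite <- Hob. reflexivity.
  - destruct (ps x). { apply (proj2 (L_spec x)). }
    rewrite gcomm_mor, (proj2 (L_spec _)).
    change (fmor (gs Y) (fmor v (kap (sob x))) = fmor v (kap x)).
    rewrite <- gcomm_mor. f_equal. apply kap_s.
Qed.

Definition hmap : GMor (EI f) X := @conjG E B f X u ell ell_src ell_s.

Lemma hmap_i : gm_eq (gm_comp hmap (iinf f)) u.
Proof.
  split.
  - intro x. simpl. rewrite ell_i, tgt_idm. reflexivity.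
  - intro m. apply (conjF_i (F := u) (rho := ell)). exact ell_i.
Qed.

Lemma hmap_p : gm_eq (gm_comp p hmap) v.
Proof.
  split.
  - intro x. simpl. rewrite <- ftgt, ell_p, ftgt. reflexivity.
  - intro g. simpl. unfold cfmor.
    assert (A1 : src (fmor u (mm g)) = tgt (inv (ell (msrc g)))).
    { rewrite fsrc, tgt_inv, ell_src, mm_src. reflexivity. }
    assert (A2 : src (ell (mtgt g)) = tgt (comp (fmor u (mm g)) (inv (ell (msrc g))))).
    { rewrite tgt_comp by exact A1. rewrite ftgt, ell_src, mm_tgt. reflexivity. }
    rewrite (fcomp _ A2), (fcomp _ A1), finv, !ell_p, Hmor.
    symmetry. apply (decompF (gfun v)).
Qed.

End Lift.
Theorem proposition4p29 (E B : GpdG) (f : GMor E B) :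
  exists (Einf : GpdG) (iinf : GMor E Einf) (finf : GMor Einf B),
    gm_eq f (gm_comp finf iinf) /\
    proj_triv_cof iinf /\
    proj_fib finf /\
    has_split_cleavage finf.
Proof.
  exists (EI f), (iinf f), (finf f).
  split; [apply fact_f|]. split; [split|split].
  - intros X Y p [Hp _] u v Hs. exists (hmap Hp Hs). split; [apply hmap_i|apply hmap_p].
  - apply iinf_weq.
  - apply finf_fib.
  - exists (@cl E B f). apply finf_split.
Qed.
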